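(* Let $k\ge 2$, $n\ge 1$. The reduction $\succ$ on $P_k^n$ is terminating (strongly normalizing), but it is not weakly confluent: there exist $f,r,v$ with $f\succ r$, $f\succ v$ such that there is no $w$ with $r\succeq w$ and $v\succeq w$.
   Context: $Z_k=\{0,1,\dots,k-1\}$; $P_k^n$ is the set of all maps $f:Z_k^n\to Z_k$ in the variables $x_1,\dots,x_n$. A variable $x_i$ is essential in $f$ if there are $a_1,\dots,a_n,b\in Z_k$ with $f(a_1,\dots,a_i,\dots,a_n)\ne f(a_1,\dots,a_{i-1},b,a_{i+1},\dots,a_n)$; $Ess(f)$ is the set of essential variables. For an essential variable $x_i$ of $f$ and $c\in Z_k$, the simple subfunction $f(x_i=c)$ is the function obtained by assigning $c$ to $x_i$ (regarded in $P_k^n$ with $x_i$ fictive); we write $f\succ g$ if $g=f(x_i=c)$ for some essential $x_i$ and $c\in Z_k$, and $\succeq$ denotes the reflexive-transitive closure of $\succ$. *)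

(* Defs.v *)
From Stdlib Require Import Relations.
From mathcomp Require Import all_boot.

Set Implicit Arguments. Unset Strict Implicit. Unset Printing Implicit Defensive.

(* Z_k = 'I_k ; a point of Z_k^n is a finite function 'I_n -> 'I_k
   (variable x_i, i : 'I_n, corresponds to x_{i+1}). *)
Definition point (k n : nat) := {ffun 'I_n -> 'I_k}.

Definition Pkn (k n : nat) := {ffun point k n -> 'I_k}.

Definition upd k n (a : point k n) (i : 'I_n) (b : 'I_k) : point k n :=
  [ffun j => if j == i then b else a j].

Definition essential k n (f : Pkn k n) (i : 'I_n) : Prop :=
  exists (a : point k n) (b : 'I_k), f a <> f (upd a i b).

(* simple subfunction f(x_i = c), regarded in P_k^n with x_i fictive *)
Definition subfun k n (f : Pkn k n) (i : 'I_n) (c : 'I_k) : Pkn k n :=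
  [ffun a => f (upd a i c)].

Definition succ k n (f g : Pkn k n) : Prop :=
  exists (i : 'I_n) (c : 'I_k), essential f i /\ g = subfun f i c.

Definition succeq k n : relation (Pkn k n) := clos_refl_trans _ (@succ k n).

(* Main.v *)
Require Import Defs.
From Stdlib Require Import Relations.
From mathcomp Require Import all_boot.

Set Implicit Arguments. Unset Strict Implicit. Unset Printing Implicit Defensive.

Section S.
Variables k n : nat.

Lemma upd_upd_same (a : point k n) i b c : upd (upd a i b) i c = upd a i c.
Proof. apply/ffunP => j; rewrite !ffunE; by case: (j == i). Qed.

Lemma upd_upd_comm (a : point k n) i j b c : j != i ->
  upd (upd a j b) i c = upd (upd a i c) j b.
Proof.
move=> ji; apply/ffunP => l; rewrite !ffunE.
case: (eqVneq l i) => [li|li]; case: (eqVneq l j) => [lj|lj] //.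
by subst; rewrite eqxx in ji.
Qed.

Definition essb (f : Pkn k n) (i : 'I_n) : bool :=
  [exists a : point k n, [exists b : 'I_k, f a != f (upd a i b)]].

Lemma essP f i : essential f i <-> essb f i.
Proof.
split.
  move=> [a [b H]]; apply/existsP; exists a; apply/existsP; exists b; apply/eqP; exact H.
move=> /existsP [a /existsP [b /eqP H]]; by exists a, b.
Qed.

Definition meas (f : Pkn k n) := #|[set i | essb f i]|.

Lemma succ_meas f g : succ f g -> meas g < meas f.
Proof.
move=> [i [c [Hi ->]]]; apply: proper_card; apply/properP; split.
  apply/subsetP => j; rewrite !inE => /existsP [a /existsP [b]].
  rewrite !ffunE => H.
  case: (eqVneq j i) => [ji|ji].
    by rewrite ji upd_upd_same eqxx in H.
  apply/existsP; exists (upd a i c); apply/existsP; exists b.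
  by rewrite -upd_upd_comm.
exists i; first by rewrite inE; apply/essP.
rewrite inE; apply/negP => /existsP [a /existsP [b]].
by rewrite !ffunE upd_upd_same eqxx.
Qed.

Lemma wf_succ : well_founded (fun g f : Pkn k n => succ f g).
Proof.
move=> f; have [m Hm] : exists m, meas f < m by exists (meas f).+1; exact: ltnSn.
elim: m f Hm => [f|m IH f Hm]; first by rewrite ltn0. constructor => g /succ_meas Hg.
apply: IH; exact: leq_trans Hg Hm.
Qed.

Lemma const_nf (c : 'I_k) w : succeq [ffun _ : point k n => c] w -> w = [ffun _ => c].
Proof.
move=> H; have : forall x y, succeq x y -> x = [ffun _ : point k n => c] -> y = x.
  move=> x y; elim => {x y} [x y [i [d [[a [b Hab]] _]]] E|x _|x y z _ IH1 _ IH2 E].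
  - by exfalso; apply: Hab; rewrite E !ffunE.
  - by [].
  - by rewrite IH2 IH1 // IH1.
by move/(_ _ _ H erefl).
Qed.

End S.

Theorem theorem3 (k n : nat) (hk : 2 <= k) (hn : 1 <= n) :
  (* terminating: no infinite chain f0 > f1 > ... *)
  well_founded (fun g f : Pkn k n => succ f g) /\
  (* not weakly confluent *)
  (exists f r v : Pkn k n,
      succ f r /\ succ f v /\ ~ (exists w : Pkn k n, succeq r w /\ succeq v w)).
Proof.
split; first exact: wf_succ.
pose i0 : 'I_n := Ordinal hn.
pose c0 : 'I_k := Ordinal (ltn_trans (ltn0Sn 0) hk).
pose c1 : 'I_k := Ordinal hk.
pose f : Pkn k n := [ffun a : point k n => a i0].
have ess : essential f i0.
  exists [ffun _ => c0], c1; rewrite !ffunE eqxx => /(congr1 val) //.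
exists f, [ffun _ => c0], [ffun _ => c1].
split; [exists i0, c0|split; [exists i0, c1|]].
- split=> //; apply/ffunP => a; by rewrite !ffunE eqxx.
- split=> //; apply/ffunP => a; by rewrite !ffunE eqxx.
move=> [w [/const_nf H1 /const_nf H2]].
have := congr1 (fun g : Pkn k n => val (g [ffun _ => c0])) (etrans (esym H1) H2).
by rewrite !ffunE.
Qed.
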